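(* Fix $B>1$ and $H>0$, and let $$x(s)=\frac1H\sqrt{1+B^2+2B\sin\!\big(Hs+\tfrac{3\pi}{2}\big)},\qquad z(s)=\int_{3\pi/(2H)}^{\,s+3\pi/(2H)}\frac{1+B\sin(Ht)}{\sqrt{1+B^2+2B\sin(Ht)}}\,dt ,$$ $g(s)=x(s)-\frac{x'(s)}{z'(s)}z(s)$, all considered on $I_0=(-r_0,r_0)$, where $r_0$ is the smallest positive value with $z'(r_0)=0$. Then there exists $\bar r\in(0,r_0)$ with $g(\bar r)=g(-\bar r)=0$, and for all $r\in[-\bar r,\bar r]$ we have $g(r)\ge0$, $x''(r)>0$ and $x'(r)z(r)\le0$. In particular, with $R_0^2=x(\bar r)^2+z(\bar r)^2$, the surface $\Sigma$ obtained by rotating $\beta|_{[-\bar r,\bar r]}$, $\beta=(x,0,z)$, about the $z$-axis is a free boundary CMC surface in the ball $\mathbb B^3_{R_0}$ of radius $R_0$ centered at the origin and satisfies at every point $$|\Phi|^2\langle\vec x,N\rangle^2\le\tfrac12\big(2+H_\Sigma\langle\vec x,N\rangle\big)^2,$$ where $N=(-z'\cos\theta,-z'\sin\theta,x')$ at $(x(s)\cos\theta,x(s)\sin\theta,z(s))$ and $H_\Sigma$ is the (constant) mean curvature of $\Sigma$ with respect to $N$.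
   Context: For $B>1$, rotating $\beta$ about the $z$-axis gives a Delaunay nodoid (an immersed surface of revolution of constant mean curvature); $\beta$ is parametrized by arc length. Free boundary in a ball $\mathbb B^3_{R}$: interior in the open ball, boundary on the sphere of radius $R$, meeting it orthogonally. Conventions: shape operator $A$ w.r.t. $N$ defined by $\langle A(Y),Z\rangle=\langle\bar\nabla_YZ,N\rangle$; mean curvature $=\operatorname{tr}A$ (unnormalized); $\Phi=\Pi-\frac{H_\Sigma}2g_\Sigma$, $|\Phi|^2=|A|^2-H_\Sigma^2/2$; $\vec x$ the position vector. *)

(* Defs.v *)
From Stdlib Require Import Reals Lra.
Open Scope R_scope.

Record R3 := mkR3 { c1 : R; c2 : R; c3 : R }.
Definition dot (u v : R3) : R := c1 u * c1 v + c2 u * c2 v + c3 u * c3 v.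

Definition has_deriv3 (f : R -> R3) (a : R) (v : R3) : Prop :=
  derivable_pt_lim (fun u => c1 (f u)) a (c1 v) /\
  derivable_pt_lim (fun u => c2 (f u)) a (c2 v) /\
  derivable_pt_lim (fun u => c3 (f u)) a (c3 v).

Record jet := mkJet { jXs : R3; jXt : R3; jXss : R3; jXst : R3; jXtt : R3 }.

Definition is_jet (X : R -> R -> R3) (s t : R) (J : jet) : Prop :=
  exists Ds Dt : R -> R -> R3,
    (forall u v, has_deriv3 (fun a => X a v) u (Ds u v)) /\
    (forall u v, has_deriv3 (fun b => X u b) v (Dt u v)) /\
    jXs J = Ds s t /\ jXt J = Dt s t /\
    has_deriv3 (fun a => Ds a t) s (jXss J) /\
    has_deriv3 (fun b => Ds s b) t (jXst J) /\
    has_deriv3 (fun b => Dt s b) t (jXtt J).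

Definition fE (J : jet) := dot (jXs J) (jXs J).
Definition fF (J : jet) := dot (jXs J) (jXt J).
Definition fG (J : jet) := dot (jXt J) (jXt J).
Definition fdet (J : jet) := fE J * fG J - fF J * fF J.
Definition se (J : jet) (N : R3) := dot (jXss J) N.
Definition sf (J : jet) (N : R3) := dot (jXst J) N.
Definition sg (J : jet) (N : R3) := dot (jXtt J) N.

(* matrix of the shape operator A = I^{-1} II in the coordinate basis *)
Definition A11 J N := (fG J * se J N - fF J * sf J N) / fdet J.
Definition A12 J N := (fG J * sf J N - fF J * sg J N) / fdet J.
Definition A21 J N := (fE J * sf J N - fF J * se J N) / fdet J.
Definition A22 J N := (fE J * sg J N - fF J * sf J N) / fdet J.

(* unnormalized mean curvature H = tr A *)
Definition mean_curv (J : jet) (N : R3) : R := A11 J N + A22 J N.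
(* |A|^2 = tr (A^2) (A is self-adjoint) *)
Definition normA2 (J : jet) (N : R3) : R :=
  A11 J N ^ 2 + 2 * A12 J N * A21 J N + A22 J N ^ 2.
Definition normPhi2 (J : jet) (N : R3) : R := normA2 J N - mean_curv J N ^ 2 / 2.

Definition free_boundary_CMC (X N : R -> R -> R3) (a R0 : R) : Prop :=
  (exists Hc : R, forall s t, -a <= s <= a ->
     exists J, is_jet X s t J /\ fdet J > 0 /\
       dot (N s t) (N s t) = 1 /\ dot (N s t) (jXs J) = 0 /\ dot (N s t) (jXt J) = 0 /\
       mean_curv J (N s t) = Hc) /\
  (forall s t, -a < s < a -> dot (X s t) (X s t) < R0 ^ 2) /\
  (forall t, dot (X a t) (X a t) = R0 ^ 2 /\ dot (X (-a) t) (X (-a) t) = R0 ^ 2) /\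
  (* orthogonality along the boundary: N tangent to the sphere *)
  (forall t, dot (X a t) (N a t) = 0 /\ dot (X (-a) t) (N (-a) t) = 0).

Definition xN (B H s : R) : R :=
  / H * sqrt (1 + B ^ 2 + 2 * B * sin (H * s + 3 * PI / 2)).

Definition zint (B H t : R) : R :=
  (1 + B * sin (H * t)) / sqrt (1 + B ^ 2 + 2 * B * sin (H * t)).
Definition zpN (B H s : R) : R := zint B H (s + 3 * PI / (2 * H)).

Definition Xrot (x z : R -> R) (s th : R) : R3 :=
  mkR3 (x s * cos th) (x s * sin th) (z s).
Definition Nrot (dx dz : R -> R) (s th : R) : R3 :=
  mkR3 (- dz s * cos th) (- dz s * sin th) (dx s).

(* Main.v *)
Require Import Defs.
From Stdlib Require Import Reals Lra Psatz FunctionalExtensionality.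
From Coquelicot Require Import Coquelicot.
Open Scope R_scope.
Definition Dn (B H s : R) := 1 + B^2 - 2*B*cos(H*s).
Definition qn (B H s : R) := sqrt (Dn B H s).

Lemma Dn_pos B H s : 1 < B -> 0 < Dn B H s.
Proof. intros hB. unfold Dn. pose proof (COS_bound (H*s)). nra. Qed.

Lemma Dn_le B H s : 1 < B -> Dn B H s <= (B+1)^2.
Proof. intros hB. unfold Dn. pose proof (COS_bound (H*s)). nra. Qed.

Lemma qn_pos B H s : 1 < B -> 0 < qn B H s.
Proof. intros; apply sqrt_lt_R0, Dn_pos; auto. Qed.

Lemma qn_sq B H s : 1 < B -> qn B H s * qn B H s = Dn B H s.
Proof. intros; apply sqrt_sqrt; left; apply Dn_pos; auto. Qed.

Lemma sin3 a : sin (a + 3 * PI / 2) = - cos a.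
Proof. replace (3*PI/2) with (3*(PI/2)) by field. rewrite sin_plus, sin_3PI2, cos_3PI2. ring. Qed.

Lemma xN_eq B H s : xN B H s = qn B H s / H.
Proof. unfold xN, qn, Dn. rewrite sin3. unfold Rdiv. rewrite Rmult_comm. f_equal. f_equal. ring. Qed.

Lemma zpN_eq B H s : H <> 0 -> zpN B H s = (1 - B*cos(H*s)) / qn B H s.
Proof. intros hH. unfold zpN, zint, qn, Dn.
  replace (H * (s + 3 * PI / (2 * H))) with (H*s + 3*PI/2) by (field; auto).
  rewrite sin3. f_equal; [ring| f_equal; ring]. Qed.

Ltac fixsq B H s :=
  replace (1 + B*(B*1) + - (2*B*cos(H*s))) with (1 + B^2 - 2*B*cos(H*s)) by ring.

Lemma d_xN B H s : 1 < B -> 0 < H ->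
  derivable_pt_lim (xN B H) s (B*sin(H*s)/qn B H s).
Proof. intros hB hH. apply is_derive_Reals.
  apply (is_derive_ext (fun s => sqrt (1 + B^2 - 2*B*cos(H*s)) / H)).
  { intros t. rewrite xN_eq. reflexivity. }
  pose proof (qn_pos B H s hB) as hq. unfold qn, Dn in *.
  auto_derive.
  - pose proof (Dn_pos B H s hB). unfold Dn in *. lra.
  - replace (sqrt (1 + B * (B * 1) + - (2 * B * cos (H * s)))) with (sqrt (1 + B ^ 2 - 2 * B * cos (H * s))) by (f_equal; ring).
    field. split; lra.
Qed.

Lemma d_dx B H s : 1 < B -> 0 < H ->
  derivable_pt_lim (fun s => B*sin(H*s)/qn B H s) s
    (B*H*cos(H*s)/qn B H s - B^2*H*sin(H*s)^2/(qn B H s)^3).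
Proof. intros hB hH. apply is_derive_Reals.
  pose proof (qn_pos B H s hB) as hq. pose proof (Dn_pos B H s hB) as hD.
  pose proof (qn_sq B H s hB) as hsq.
  unfold qn, Dn in *.
  auto_derive; fixsq B H s.
  - repeat split; lra.
  - field; lra.
Qed.

Definition zppn (B H s : R) := B*H*sin(H*s)/qn B H s - (1 - B*cos(H*s))*B*H*sin(H*s)/(qn B H s)^3.

Lemma d_zp B H s : 1 < B -> 0 < H ->
  derivable_pt_lim (zpN B H) s (zppn B H s).
Proof. intros hB hH. apply is_derive_Reals.
  apply (is_derive_ext (fun s => (1 - B*cos(H*s)) / qn B H s)).
  { intros t. rewrite zpN_eq by lra. reflexivity. }
  pose proof (qn_pos B H s hB) as hq. pose proof (Dn_pos B H s hB) as hD.
  unfold zppn, qn, Dn in *.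
  auto_derive; fixsq B H s.
  - repeat split; lra.
  - field; lra.
Qed.
Lemma nod_alg B H c S q : 0 < q -> q*q = 1+B^2-2*B*c -> S^2 + c^2 = 1 -> 0 < H ->
  (B*S/q)^2 + ((1-B*c)/q)^2 = 1 /\
  (B*S/q) * (B*H*S/q - (1-B*c)*B*H*S/q^3) - (B*H*c/q - B^2*H*S^2/q^3) * ((1-B*c)/q)
    = B*H*(B-c)/(q*q) /\
  ((1-B*c)/q) / (q/H) = H*(1-B*c)/(q*q) /\
  B*H*c/q - B^2*H*S^2/q^3 = B*H*(1-B*c)*(c-B)/q^3.
Proof. intros hq hqq hS hH.
  assert (e1 : S^2 = 1 - c^2) by lra.
  repeat split.
  - replace ((B*S/q)^2 + ((1-B*c)/q)^2) with ((B^2*S^2 + (1-B*c)^2)/(q*q)) by (field; lra).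
    rewrite e1, hqq. field; nra.
  - replace ((B*S/q) * (B*H*S/q - (1-B*c)*B*H*S/q^3) - (B*H*c/q - B^2*H*S^2/q^3) * ((1-B*c)/q))
      with ((B^2*H*S^2*(q*q) - B^2*H*S^2*(1-B*c) - B*H*c*(1-B*c)*(q*q) + B^2*H*S^2*(1-B*c))/((q*q)*(q*q))) by (field; lra).
    rewrite e1, hqq. field; repeat split; try lra; nra.
  - field; nra.
  - replace (B*H*c/q - B^2*H*S^2/q^3) with ((B*H*c*(q*q) - B^2*H*S^2)/q^3) by (field; lra).
    rewrite e1, hqq. field; nra.
Qed.
Definition mkJ (a b d e f ct st : R) : jet :=
  mkJet (mkR3 (b*ct) (b*st) d) (mkR3 (- a * st) (a*ct) 0) (mkR3 (e*ct) (e*st) f)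
        (mkR3 (-b*st) (b*ct) 0) (mkR3 (-a*ct) (-a*st) 0).

Lemma jet_alg a b d e f ct st : ct^2 + st^2 = 1 -> b^2 + d^2 = 1 -> 0 < a ->
  let J := mkJ a b d e f ct st in let N := mkR3 (-d*ct) (-d*st) b in
  fdet J > 0 /\ dot N N = 1 /\ dot N (jXs J) = 0 /\ dot N (jXt J) = 0 /\
  mean_curv J N = (b*f - e*d) + d/a /\
  normPhi2 J N = ((b*f - e*d) - d/a)^2/2.
Proof. intros h1 h2 ha J N.
  assert (hE : fE J = 1). { unfold fE, dot, J, mkJ; simpl. assert (b^2*(ct^2+st^2) = b^2) by (rewrite h1; ring). lra. }
  assert (hF : fF J = 0). { unfold fF, dot, J, mkJ; simpl. ring. }
  assert (hG : fG J = a^2). { unfold fG, dot, J, mkJ; simpl. assert (a^2*(ct^2+st^2) = a^2) by (rewrite h1; ring). lra. }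
  assert (hd : fdet J = a^2). { unfold fdet. rewrite hE, hF, hG. ring. }
  assert (he : se J N = b*f - e*d). { unfold se, dot, J, N, mkJ; simpl. assert (e*d*(ct^2+st^2) = e*d) by (rewrite h1; ring). lra. }
  assert (hf : sf J N = 0). { unfold sf, dot, J, N, mkJ; simpl. ring. }
  assert (hg : sg J N = a*d). { unfold sg, dot, J, N, mkJ; simpl. assert (a*d*(ct^2+st^2) = a*d) by (rewrite h1; ring). lra. }
  assert (hA11 : A11 J N = b*f - e*d). { unfold A11. rewrite hd, hF, hG, he, hf. field; lra. }
  assert (hA22 : A22 J N = d/a). { unfold A22. rewrite hd, hF, hE, hg, hf. field; lra. }
  assert (hA12 : A12 J N = 0). { unfold A12. rewrite hd, hF, hf. field; lra. }
  repeat split.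
  - rewrite hd. nra.
  - unfold dot, N; simpl. assert (d^2*(ct^2+st^2) = d^2) by (rewrite h1; ring). lra.
  - unfold dot, N, J, mkJ; simpl. assert (b*d*(ct^2+st^2) = b*d) by (rewrite h1; ring). lra.
  - unfold dot, N, J, mkJ; simpl. ring.
  - unfold mean_curv. rewrite hA11, hA22. ring.
  - unfold normPhi2, normA2, mean_curv. rewrite hA11, hA22, hA12. field; lra.
Qed.

Lemma dl_eq f x l l' : derivable_pt_lim f x l -> l = l' -> derivable_pt_lim f x l'.
Proof. intros h e; subst; auto. Qed.

Lemma dl_mulc f x l c : derivable_pt_lim f x l -> derivable_pt_lim (fun a => f a * c) x (l*c).
Proof. intros h. pose proof (derivable_pt_lim_mult f (fun _ => c) x l 0 h (derivable_pt_lim_const c x)) as h2.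
  replace (l*c) with (l * c + f x * 0) by ring. exact h2. Qed.

Lemma dl_kcos k v : derivable_pt_lim (fun b => k * cos b) v (- k * sin v).
Proof. apply is_derive_Reals. auto_derive; auto. ring. Qed.
Lemma dl_ksin k v : derivable_pt_lim (fun b => k * sin b) v (k * cos v).
Proof. apply is_derive_Reals. auto_derive; auto. ring. Qed.
Lemma dl_mksin k v : derivable_pt_lim (fun b => - k * sin b) v (- k * cos v).
Proof. apply is_derive_Reals. auto_derive; auto. ring. Qed.
Lemma dl_cst (k v : R) : derivable_pt_lim (fun _ => k) v 0.
Proof. apply derivable_pt_lim_const. Qed.

Lemma jet_ok (x z dx ddx zp zpp : R -> R) s t :
  (forall s, derivable_pt_lim x s (dx s)) ->
  (forall s, derivable_pt_lim dx s (ddx s)) ->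
  (forall s, derivable_pt_lim z s (zp s)) ->
  derivable_pt_lim zp s (zpp s) ->
  is_jet (Xrot x z) s t (mkJ (x s) (dx s) (zp s) (ddx s) (zpp s) (cos t) (sin t)).
Proof. intros hx hdx hz hzp.
  exists (fun u v => mkR3 (dx u * cos v) (dx u * sin v) (zp u)).
  exists (fun u v => mkR3 (- x u * sin v) (x u * cos v) 0).
  unfold has_deriv3, Xrot, mkJ; simpl.
  repeat split; intros.
  all: try (apply dl_mulc; auto).
  all: auto.
  all: try apply dl_kcos; try apply dl_ksin; try apply dl_mksin; try apply dl_cst.
  all: try (eapply dl_eq; [apply dl_ksin|ring]).
  all: try (eapply dl_eq; [apply dl_kcos|ring]).
  all: try (eapply dl_eq; [apply dl_mksin|ring]).
Qed.

Lemma dl_neg f f' : (forall s, derivable_pt_lim f s (f' s)) ->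
  forall s, derivable_pt_lim (fun u => f (-u)) s (- f' (-s)).
Proof. intros h s. apply is_derive_Reals.
  assert (h1 := proj2 (is_derive_Reals f (-s) (f' (-s))) (h (-s))).
  eapply is_derive_ext_loc. apply filter_forall. intros; reflexivity.
  pose proof (is_derive_comp f (fun u => -u) s (f' (-s)) (-1)) as h2.
  simpl in h2. replace (- f' (- s)) with (scal (-1) (f' (-s))). apply h2. auto.
  auto_derive; auto. unfold scal; simpl. unfold mult; simpl. ring.
Qed.

Lemma dl_cont f x l : derivable_pt_lim f x l -> continuity_pt f x.
Proof. intros h. apply derivable_continuous_pt. exists l; auto. Qed.
Lemma final_alg B H c q p : 0 < q -> q*q = 1+B^2-2*B*c -> c^2 <= 1 -> 0 < H -> 1 < B ->
  0 <= p -> H*p <= B*c - 1 ->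
  (H*(B^2-1)/(q*q))^2/2 * p^2 <= / 2 * (2 + H*p)^2.
Proof. intros hq hqq hc hH hB hp hHp.
  set (K := H*(B^2-1)/(q*q)).
  assert (hK0 : 0 <= K). { unfold K. apply Rmult_le_pos. nra. left; apply Rinv_0_lt_compat; nra. }
  assert (hKp : K*p - H*p = H*p*(2*B*c-2)/(q*q)). { unfold K. assert (0 < 1 + B^2 - 2*B*c) by nra. rewrite hqq. field. lra. }
  assert (h1 : H*p*(2*B*c-2) <= 2*(q*q)). { rewrite hqq. assert (B^2*c^2 <= B^2) by nra. assert (0 <= H*p) by nra. assert (H*p*(B*c-1) <= (B*c-1)*(B*c-1)) by (apply Rmult_le_compat_r; lra). nra. }
  assert (h2 : H*p*(2*B*c-2)/(q*q) <= 2).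
  { apply (Rmult_le_reg_r (q*q)). nra. unfold Rdiv. rewrite Rmult_assoc, Rinv_l by nra. lra. }
  assert (0 <= K*p) by nra.
  assert (K*p <= 2 + H*p) by lra.
  assert ((K*p)^2 <= (2+H*p)^2) by nra.
  replace (K^2/2*p^2) with (/2*(K*p)^2) by field. lra.
Qed.
Theorem proposition3p6
  (B H : R) (hB : 1 < B) (hH : 0 < H)
  (z : R -> R) (hz0 : z 0 = 0)
  (hz : forall s, derivable_pt_lim z s (zpN B H s))
  (dx ddx : R -> R)
  (hdx : forall s, derivable_pt_lim (xN B H) s (dx s))
  (hddx : forall s, derivable_pt_lim dx s (ddx s))
  (r0 : R) (hr0 : 0 < r0) (hr0z : zpN B H r0 = 0)
  (hr0min : forall r, 0 < r < r0 -> zpN B H r <> 0) :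
  let g := fun s => xN B H s - dx s / zpN B H s * z s in
  exists rbar : R,
    0 < rbar < r0 /\ g rbar = 0 /\ g (- rbar) = 0 /\
    (forall r, - rbar <= r <= rbar ->
       0 <= g r /\ 0 < ddx r /\ dx r * z r <= 0) /\
    let R0 := sqrt (xN B H rbar ^ 2 + z rbar ^ 2) in
    let X := Xrot (xN B H) z in
    let N := Nrot dx (zpN B H) in
    free_boundary_CMC X N rbar R0 /\
    (forall s th, - rbar <= s <= rbar ->
       exists J, is_jet X s th J /\
         normPhi2 J (N s th) * (dot (X s th) (N s th)) ^ 2
           <= / 2 * (2 + mean_curv J (N s th) * dot (X s th) (N s th)) ^ 2).
Proof.
  intros g.
  assert (hH0 : H <> 0) by lra.
  assert (hdxe : forall s, dx s = B*sin(H*s)/qn B H s).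
  { intros s. eapply uniqueness_limite; [apply hdx| apply d_xN; auto]. }
  assert (hdxf : dx = fun s => B*sin(H*s)/qn B H s).
  { apply functional_extensionality; auto. }
  assert (hddxe : forall s, ddx s = B*H*cos(H*s)/qn B H s - B^2*H*sin(H*s)^2/(qn B H s)^3).
  { intros s. eapply uniqueness_limite; [apply hddx|]. rewrite hdxf. apply d_dx; auto. }
  assert (hzpe : forall s, zpN B H s = (1 - B*cos(H*s)) / qn B H s) by (intros; apply zpN_eq; auto).
  assert (hzpd : derivable (zpN B H)).
  { intros s. exists (zppn B H s). apply d_zp; auto. }
  assert (hzcont : continuity (zpN B H)) by (apply derivable_continuous; auto).
  assert (hzp0 : zpN B H 0 < 0).
  { rewrite hzpe. pose proof (qn_pos B H 0 hB). rewrite Rmult_0_r, cos_0.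
    apply Rdiv_neg_pos; lra. }
  assert (hzpneg : forall s, 0 <= s < r0 -> zpN B H s < 0).
  { intros s hs. destruct (Rlt_or_le (zpN B H s) 0) as [h|h]; auto. exfalso.
    destruct h as [h|h].
    - destruct (IVT (zpN B H) 0 s hzcont) as [w [hw1 hw2]]; try lra.
      { destruct (Req_dec s 0); [subst; lra| lra]. }
      assert (w <> 0) by (intro; subst; lra).
      apply (hr0min w); auto; lra.
    - assert (s <> 0) by (intro; subst; lra). apply (hr0min s); auto; lra. }
  assert (hcosneg : forall s, cos (H*(-s)) = cos (H*s)).
  { intros s. replace (H*(-s)) with (-(H*s)) by ring. apply cos_neg. }
  assert (hsinneg : forall s, sin (H*(-s)) = - sin (H*s)).
  { intros s. replace (H*(-s)) with (-(H*s)) by ring. apply sin_neg. }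
  assert (hqev : forall s, qn B H (-s) = qn B H s).
  { intros s. unfold qn, Dn. rewrite hcosneg. auto. }
  assert (hzpev : forall s, zpN B H (-s) = zpN B H s).
  { intros s. rewrite !hzpe, hcosneg, hqev. auto. }
  assert (hxev : forall s, xN B H (-s) = xN B H s).
  { intros s. rewrite !xN_eq, hqev. auto. }
  assert (hdxodd : forall s, dx (-s) = - dx s).
  { intros s. rewrite !hdxe, hsinneg, hqev. field. apply Rgt_not_eq, qn_pos; auto. }
  assert (hzpneg2 : forall s, -r0 < s < r0 -> zpN B H s < 0).
  { intros s hs. destruct (Rle_or_lt 0 s).
    - apply hzpneg; lra.
    - rewrite <- hzpev. apply hzpneg; lra. }
  assert (hBc : forall s, -r0 < s < r0 -> 1 < B*cos(H*s)).
  { intros s hs. pose proof (hzpneg2 s hs) as h. rewrite hzpe in h.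
    pose proof (qn_pos B H s hB).
    assert (h2 : (1 - B*cos(H*s)) / qn B H s * qn B H s < 0 * qn B H s) by (apply Rmult_lt_compat_r; lra).
    field_simplify in h2; lra. }
  assert (hr0pi : H*r0 <= PI/2).
  { destruct (Rle_or_lt (H*r0) (PI/2)) as [h|h]; auto. exfalso.
    assert (hs : -r0 < PI/(2*H) < r0).
    { pose proof PI_RGT_0. split. apply Rlt_trans with 0. lra. apply Rdiv_lt_0_compat; lra.
      apply (Rmult_lt_reg_l H); auto. replace (H * (PI / (2*H))) with (PI/2) by (field; lra). lra. }
    pose proof (hBc _ hs) as h2. replace (H * (PI / (2*H))) with (PI/2) in h2 by (field; lra).
    rewrite cos_PI2 in h2. lra. }
  assert (hsin : forall s, 0 <= s <= r0 -> 0 <= sin (H*s)).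
  { intros s hs. apply sin_ge_0. nra. pose proof PI_RGT_0. nra. }
  assert (hdxpos : forall s, 0 <= s <= r0 -> 0 <= dx s).
  { intros s hs. rewrite hdxe. pose proof (qn_pos B H s hB). pose proof (hsin s hs).
    apply Rmult_le_pos. nra. left; apply Rinv_0_lt_compat; auto. }
  assert (halg : forall s, 
    (dx s)^2 + (zpN B H s)^2 = 1 /\
    dx s * zppn B H s - ddx s * zpN B H s = B*H*(B-cos(H*s))/(qn B H s * qn B H s) /\
    zpN B H s / xN B H s = H*(1-B*cos(H*s))/(qn B H s * qn B H s) /\
    ddx s = B*H*(1-B*cos(H*s))*(cos(H*s)-B)/(qn B H s)^3).
  { intros s. rewrite hdxe, hddxe, hzpe, xN_eq. unfold zppn.
    apply nod_alg.
    - apply qn_pos; auto.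
    - rewrite qn_sq by auto. unfold Dn; ring.
    - pose proof (sin2_cos2 (H*s)) as e. unfold Rsqr in e. lra.
    - auto. }
  assert (hddxpos : forall s, -r0 < s < r0 -> 0 < ddx s).
  { intros s hs. destruct (halg s) as [_ [_ [_ e]]]. rewrite e.
    pose proof (hBc s hs). pose proof (COS_bound (H*s)). pose proof (qn_pos B H s hB).
    apply Rdiv_lt_0_compat. 2: apply pow_lt; auto.
    assert (0 < (B*cos(H*s) - 1)*(B - cos(H*s))) by (apply Rmult_lt_0_compat; lra).
    replace (B*H*(1-B*cos(H*s))*(cos(H*s)-B)) with ((B*H)*((B*cos(H*s) - 1)*(B - cos(H*s)))) by ring.
    apply Rmult_lt_0_compat; nra. }
  assert (hzodd : forall s, z (-s) = - z s).
  { intros s. set (h := fun u => z u + z (-u)).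
    assert (hd : forall c, derivable_pt_lim h c (zpN B H c + - zpN B H (-c))).
    { intros c. apply derivable_pt_lim_plus; [apply hz | apply (dl_neg z (zpN B H) hz)]. }
    assert (hh0 : h 0 = 0). { unfold h. rewrite Ropp_0, hz0. ring. }
    destruct (Rtotal_order s 0) as [hs|[hs|hs]].
    - destruct (MVT_cor2 h _ s 0 hs (fun c _ => hd c)) as [c [e _]].
      rewrite hzpev, hh0 in e. unfold h in e. lra.
    - subst. rewrite Ropp_0, hz0. ring.
    - destruct (MVT_cor2 h _ 0 s hs (fun c _ => hd c)) as [c [e _]].
      rewrite hzpev, hh0 in e. unfold h in e. lra. }
  assert (hzneg : forall s, 0 < s <= r0 -> z s < 0).
  { intros s hs. destruct (MVT_cor2 z (zpN B H) 0 s (proj1 hs) (fun c _ => hz c)) as [c [e hc]].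
    rewrite hz0 in e. pose proof (hzpneg c ltac:(lra)). nra. }
  set (gp := fun s => (dx s * zppn B H s - ddx s * zpN B H s) * z s / (zpN B H s)^2).
  assert (hgd : forall s, zpN B H s <> 0 -> derivable_pt_lim g s (gp s)).
  { intros s hs.
    pose proof (derivable_pt_lim_div dx (zpN B H) s (ddx s) (zppn B H s) (hddx s) (d_zp B H s hB hH) hs) as h1.
    pose proof (derivable_pt_lim_mult _ z s _ _ h1 (hz s)) as h2.
    pose proof (derivable_pt_lim_minus _ _ s _ _ (hdx s) h2) as h3.
    eapply dl_eq. exact h3. unfold gp, Rsqr, div_fct. field. auto. }
  assert (hgpneg : forall s, 0 < s < r0 -> gp s < 0).
  { intros s hs. unfold gp. destruct (halg s) as [_ [e _]]. rewrite e.
    pose proof (hzneg s ltac:(lra)). pose proof (hzpneg s ltac:(lra)).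
    pose proof (qn_pos B H s hB). pose proof (COS_bound (H*s)).
    assert (0 < B*H*(B - cos(H*s)) / (qn B H s * qn B H s)).
    { apply Rdiv_lt_0_compat. apply Rmult_lt_0_compat; nra. nra. }
    apply Rdiv_neg_pos. nra. nra. }
  assert (hgev : forall s, g (-s) = g s).
  { intros s. unfold g. rewrite hxev, hdxodd, hzpev, hzodd. unfold Rdiv; ring. }
  assert (hxpos : forall s, 0 < xN B H s).
  { intros s. rewrite xN_eq. apply Rdiv_lt_0_compat; auto. apply qn_pos; auto. }
  assert (hg0 : 0 < g 0).
  { unfold g. rewrite hz0, Rmult_0_r, Rminus_0_r. auto. }
  assert (hxM : forall s, xN B H s <= (B+1)/H).
  { intros s. rewrite xN_eq. unfold Rdiv. apply Rmult_le_compat_r.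
    left; apply Rinv_0_lt_compat; auto.
    unfold qn. rewrite <- (sqrt_pow2 (B+1)) by lra. apply sqrt_le_1_alt. apply Dn_le; auto. }
  assert (hr1 : exists r1, 0 < r1 < r0 /\ g r1 < 0).
  { set (s1 := r0/2).
    assert (hs1 : 0 < s1 < r0) by (unfold s1; lra).
    assert (hsin1 : 0 < sin (H*s1)).
    { apply sin_gt_0. nra. pose proof PI_RGT_0. unfold s1. nra. }
    assert (hdx1 : 0 < dx s1).
    { rewrite hdxe. apply Rdiv_lt_0_compat. nra. apply qn_pos; auto. }
    assert (hz1 : z s1 < 0) by (apply hzneg; lra).
    set (k := - (dx s1 * z s1)).
    assert (hk : 0 < k) by (unfold k; nra).
    set (M := (B+1)/H).
    assert (hM : 0 < M) by (unfold M; apply Rdiv_lt_0_compat; lra).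
    pose proof (hzcont r0) as hc.
    unfold continuity_pt, continue_in, limit1_in, limit_in in hc.
    destruct (hc (k/M)) as [del [hdel hP]]. { apply Rdiv_lt_0_compat; auto. }
    set (s := Rmax s1 (r0 - del/2)).
    assert (hs : s1 <= s < r0).
    { split. apply Rmax_l. apply Rmax_lub_lt; lra. }
    assert (hs' : r0 - del/2 <= s) by apply Rmax_r.
    assert (hw : Rabs (zpN B H s - 0) < k/M).
    { rewrite <- hr0z. apply (hP s). split. split. exact I. lra.
      simpl. unfold R_dist. rewrite Rabs_minus_sym, Rabs_right; lra. }
    rewrite Rminus_0_r in hw. apply Rabs_def2 in hw.
    assert (hzs : zpN B H s < 0) by (apply hzpneg; lra).
    assert (hdxs : dx s1 <= dx s).
    { destruct (Req_dec s1 s) as [e|ne]. rewrite e; lra.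
      destruct (MVT_cor2 dx ddx s1 s ltac:(lra) (fun c _ => hddx c)) as [c [e hc']].
      pose proof (hddxpos c ltac:(lra)). nra. }
    assert (hzs2 : z s <= z s1).
    { destruct (Req_dec s1 s) as [e|ne]. rewrite e; lra.
      destruct (MVT_cor2 z (zpN B H) s1 s ltac:(lra) (fun c _ => hz c)) as [c [e hc']].
      pose proof (hzpneg c ltac:(lra)). nra. }
    assert (hprod : dx s * z s <= - k).
    { unfold k. assert (z s < 0) by lra. nra. }
    exists s. split. lra. unfold g.
    assert (hq : dx s / zpN B H s * z s - M = (dx s * z s - M * zpN B H s) / zpN B H s) by (field; lra).
    assert (hMw : - (M * zpN B H s) < k).
    { replace k with (M * (k/M)) by (field; lra). nra. }
    assert (0 < (dx s * z s - M * zpN B H s) / zpN B H s) by (apply Rdiv_neg_neg; lra).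
    pose proof (hxM s). fold M in H1. lra. }
  destruct hr1 as [r1 [hr1 hgr1]].
  assert (hgc : forall a, 0 <= a <= r1 -> continuity_pt (fun s => - g s) a).
  { intros a ha. apply continuity_pt_opp. apply (dl_cont g a (gp a)). apply hgd. apply Rlt_not_eq, hzpneg; lra. }
  destruct (Ranalysis5.IVT_interv (fun s => - g s) 0 r1 hgc (proj1 hr1)) as [rb [hrb hgrb]]; [lra | lra|].
  assert (hgrb0 : g rb = 0) by lra.
  assert (hrb0 : 0 < rb). { destruct hrb as [[h|h] _]; auto. subst. lra. }
  assert (hgnn0 : forall r, 0 <= r <= rb -> 0 <= g r).
  { intros r hr. destruct (Req_dec r rb) as [e|ne]. subst; lra.
    destruct (MVT_cor2 g gp r rb ltac:(lra)
       (fun c hc => hgd c (Rlt_not_eq _ _ (hzpneg c ltac:(lra))))) as [c [e hc]].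
    pose proof (hgpneg c ltac:(lra)). nra. }
  assert (hgnn : forall r, -rb <= r <= rb -> 0 <= g r).
  { intros r hr. destruct (Rle_or_lt 0 r). apply hgnn0; lra. rewrite <- (hgev r). apply hgnn0; lra. }
  assert (hdxz0 : forall r, 0 <= r <= rb -> dx r * z r <= 0).
  { intros r hr. pose proof (hdxpos r ltac:(lra)).
    destruct (Req_dec r 0) as [e|ne]. subst. rewrite hz0. lra.
    pose proof (hzneg r ltac:(lra)). nra. }
  assert (hdxz : forall r, -rb <= r <= rb -> dx r * z r <= 0).
  { intros r hr. destruct (Rle_or_lt 0 r). apply hdxz0; lra.
    pose proof (hdxz0 (-r) ltac:(lra)). rewrite hdxodd, hzodd in H1. lra. }
  exists rb. split. lra. split. auto. split. rewrite hgev; auto. split.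
  { intros r hr. split. auto. split. apply hddxpos; lra. auto. }
  intros R0 X N.
  set (Jf := fun s t => mkJ (xN B H s) (dx s) (zpN B H s) (ddx s) (zppn B H s) (cos t) (sin t)).
  assert (hJ : forall s t, is_jet X s t (Jf s t)).
  { intros s t. apply jet_ok; auto. apply d_zp; auto. }
  assert (hct : forall t, cos t ^ 2 + sin t ^ 2 = 1).
  { intros t. pose proof (sin2_cos2 t) as e. unfold Rsqr in e. lra. }
  assert (hJa : forall s t, fdet (Jf s t) > 0 /\ dot (N s t) (N s t) = 1 /\
     dot (N s t) (jXs (Jf s t)) = 0 /\ dot (N s t) (jXt (Jf s t)) = 0 /\
     mean_curv (Jf s t) (N s t) = H /\
     normPhi2 (Jf s t) (N s t) = (H*(B^2-1)/(qn B H s * qn B H s))^2/2).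
  { intros s t. destruct (halg s) as [e1 [e2 [e3 e4]]].
    pose proof (jet_alg (xN B H s) (dx s) (zpN B H s) (ddx s) (zppn B H s) (cos t) (sin t)
      (hct t) e1 (hxpos s)) as hj. simpl in hj.
    destruct hj as [j1 [j2 [j3 [j4 [j5 j6]]]]].
    assert (hqq := qn_sq B H s hB). pose proof (qn_pos B H s hB).
    unfold Dn in hqq.
    repeat split; auto.
    - change (mean_curv (Jf s t) (N s t)) with
        (mean_curv (mkJ (xN B H s) (dx s) (zpN B H s) (ddx s) (zppn B H s) (cos t) (sin t))
           (mkR3 (- zpN B H s * cos t) (- zpN B H s * sin t) (dx s))).
      rewrite j5, e2, e3. rewrite hqq. field. nra.
    - change (normPhi2 (Jf s t) (N s t)) with
        (normPhi2 (mkJ (xN B H s) (dx s) (zpN B H s) (ddx s) (zppn B H s) (cos t) (sin t))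
           (mkR3 (- zpN B H s * cos t) (- zpN B H s * sin t) (dx s))).
      rewrite j6, e2, e3. rewrite hqq. field. nra. }
  assert (hXX : forall s t, dot (X s t) (X s t) = xN B H s * xN B H s + z s * z s).
  { intros s t. unfold X, Xrot, dot; simpl.
    assert (xN B H s * xN B H s * (cos t ^2 + sin t ^2) = xN B H s * xN B H s) by (rewrite hct; ring). lra. }
  assert (hXN : forall s t, dot (X s t) (N s t) = z s * dx s - xN B H s * zpN B H s).
  { intros s t. unfold X, N, Xrot, Nrot, dot; simpl.
    assert (xN B H s * zpN B H s * (cos t ^2 + sin t ^2) = xN B H s * zpN B H s) by (rewrite hct; ring). lra. }
  set (F := fun s => xN B H s * xN B H s + z s * z s).
  assert (hFd : forall s, derivable_pt_lim F s
     (dx s * xN B H s + xN B H s * dx s + (zpN B H s * z s + z s * zpN B H s))).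
  { intros s. apply derivable_pt_lim_plus; apply derivable_pt_lim_mult; auto. }
  assert (hFev : forall s, F (-s) = F s).
  { intros s. unfold F. rewrite hxev, hzodd. ring. }
  assert (hFlt0 : forall s, 0 <= s < rb -> F s < F rb).
  { intros s hs. destruct (MVT_cor2 F _ s rb ltac:(lra) (fun c _ => hFd c)) as [c [e hc]].
    pose proof (hxpos c). pose proof (hdxpos c ltac:(lra)). pose proof (hzneg c ltac:(lra)).
    pose proof (hzpneg c ltac:(lra)).
    assert (0 < dx c * xN B H c + xN B H c * dx c + (zpN B H c * z c + z c * zpN B H c)) by nra.
    nra. }
  assert (hR0 : R0 ^ 2 = F rb).
  { unfold R0, F. rewrite pow2_sqrt. ring. nra. }
  assert (hzprb : zpN B H rb <> 0) by (apply Rlt_not_eq, hzpneg; lra).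
  assert (horth : forall s, g s = 0 -> zpN B H s <> 0 -> z s * dx s - xN B H s * zpN B H s = 0).
  { intros s e ne. unfold g in e.
    replace (z s * dx s - xN B H s * zpN B H s) with (- ((xN B H s - dx s / zpN B H s * z s) * zpN B H s)) by (field; auto).
    rewrite e. ring. }
  split.
  - split; [|split; [|split]].
    + exists H. intros s t hs. exists (Jf s t). destruct (hJa s t) as [j1 [j2 [j3 [j4 [j5 j6]]]]].
      repeat split; auto.
    + intros s t hs. rewrite hXX, hR0. fold (F s).
      destruct (Rle_or_lt 0 s). apply hFlt0; lra. rewrite <- hFev. apply hFlt0; lra.
    + intros t. rewrite !hXX, hR0. fold (F rb). fold (F (-rb)). rewrite hFev. split; auto.
    + intros t. rewrite !hXN. split. apply horth; auto.
      apply horth. rewrite hgev; auto. rewrite hzpev; auto.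
  - intros s th hs. exists (Jf s th). split. apply hJ.
    destruct (hJa s th) as [j1 [j2 [j3 [j4 [j5 j6]]]]]. rewrite j5, j6, hXN.
    assert (hqq := qn_sq B H s hB). pose proof (qn_pos B H s hB). unfold Dn in hqq.
    pose proof (COS_bound (H*s)).
    assert (hzs : zpN B H s < 0) by (apply hzpneg2; lra).
    apply final_alg with (c := cos (H*s)); auto.
    + nra.
    + replace (z s * dx s - xN B H s * zpN B H s) with (- (g s * zpN B H s)).
      pose proof (hgnn s hs). nra. unfold g. field. lra.
    + pose proof (hdxz s hs). rewrite xN_eq, hzpe.
      replace (H * (z s * dx s - qn B H s / H * ((1 - B * cos (H * s)) / qn B H s)))
        with (H * (dx s * z s) - (1 - B*cos(H*s))) by (field; lra).
      nra.
Qed.
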